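(* Let $f$ be a Boolean formula whose clauses $c$ are CNF, cardinality, XOR or NAE constraints over $x_1,\dots,x_n$, and let $F=F_f=\sum_{c}\mathrm{FE}_c$. If $a^\star\in[-1,1]^n$ is a local minimum of $F$ in $[-1,1]^n$, then $a^\star$ is a feasible solution of $F$.
   Context: Boolean values are encoded as $\pm1$, with $-1$ standing for True. Each clause $c$ is regarded as a function $\{\pm1\}^n\to\{\pm1\}$ with value $-1$ exactly when satisfied. $\mathrm{FE}_c$ is its Fourier expansion, i.e. the unique multilinear polynomial agreeing with $c$ on $\{\pm1\}^n$. Local minimum: $a$ is a local minimum of $F$ in a set $\Delta$ if there is $\delta>0$ such that $F(a)\le F(a')$ for all $a'\in\Delta$ with $\|a-a'\|_2^2\le\delta$. Feasibility: for $a\in[-1,1]^n$, let $I=\{i: a_i\in\{\pm1\}\}$. Let $F_{I\gets a_I}$ be the polynomial obtained from $F$ by fixing $x_i=a_i$ for every $i\in I$. Then $a$ is feasible if $F_{I\gets a_I}$ is a constant polynomial. *)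

(* Defs.v *)
From HB Require Import structures.
From mathcomp Require Import all_boot all_order all_algebra.
From mathcomp Require Import reals.
From mathcomp Require Import mpoly.
Set Implicit Arguments. Unset Strict Implicit. Unset Printing Implicit Defensive.
Import Order.TTheory GRing.Theory Num.Theory.
Local Open Scope ring_scope.

(* Boolean values are encoded as +-1 with -1 = True.  A point of {+-1}^n is
   represented by b : {ffun 'I_n -> bool}, with b i = true meaning x_i = -1
   (i.e. x_i is True). *)

(* A literal: a variable index together with a flag "negated". *)
Definition lit (n : nat) := ('I_n * bool)%type.

Definition lit_val n (b : {ffun 'I_n -> bool}) (l : lit n) : bool :=
  if l.2 then ~~ b l.1 else b l.1.

Inductive clause (n : nat) :=
| CNF of seq (lit n)
| Card of seq (lit n) & nat
| XOR of seq (lit n)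
| NAE of seq (lit n).

Definition clause_sat n (c : clause n) (b : {ffun 'I_n -> bool}) : bool :=
  match c with
  | CNF ls => has (lit_val b) ls
  | Card ls k => (k <= count (lit_val b) ls)%N
  | XOR ls => odd (count (lit_val b) ls)
  | NAE ls => has (lit_val b) ls && ~~ all (lit_val b) ls
  end.

Definition pm (R : nzRingType) (t : bool) : R := if t then -1 else 1.

Definition clause_fun (R : nzRingType) n (c : clause n) (b : {ffun 'I_n -> bool}) : R :=
  pm R (clause_sat c b).

Definition fourier_coef (R : fieldType) n (c : clause n) (S : {set 'I_n}) : R :=
  (2%:R ^+ n)^-1 * \sum_(b : {ffun 'I_n -> bool})
                      clause_fun R c b * \prod_(i in S) pm R (b i).

Definition FE (R : fieldType) n (c : clause n) : {mpoly R[n]} :=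
  \sum_(S : {set 'I_n}) fourier_coef R c S *: \prod_(i in S) 'X_i.

Definition F_of (R : fieldType) n (f : seq (clause n)) : {mpoly R[n]} :=
  \sum_(c <- f) FE R c.

Definition cube (R : realFieldType) n : pred ('I_n -> R) :=
  fun a => [forall i, (-1 <= a i <= 1)].

Definition local_min_in (R : realFieldType) n (P : {mpoly R[n]})
  (D : pred ('I_n -> R)) (a : 'I_n -> R) : Prop :=
  exists2 delta : R, 0 < delta &
    forall a' : 'I_n -> R, D a' ->
      \sum_(i < n) (a i - a' i) ^+ 2 <= delta -> P.@[a] <= P.@[a'].

Definition fixed_set (R : realFieldType) n (a : 'I_n -> R) : {set 'I_n} :=
  [set i | (a i == 1) || (a i == -1)].

Definition restrict (R : realFieldType) n (P : {mpoly R[n]}) (a : 'I_n -> R) : {mpoly R[n]} :=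
  comp_mpoly [tuple (if i \in fixed_set a then (a i)%:MP_[n] else 'X_i) | i < n] P.

Definition feasible (R : realFieldType) n (P : {mpoly R[n]}) (a : 'I_n -> R) : Prop :=
  exists k : R, restrict P a = k%:MP_[n].

(* Main.v *)
Require Import Defs.
From HB Require Import structures.
From mathcomp Require Import all_boot all_order all_algebra.
From mathcomp Require Import reals.
From mathcomp Require Import mpoly.
From mathcomp Require Import ring lra.
Set Implicit Arguments. Unset Strict Implicit. Unset Printing Implicit Defensive.
Import Order.TTheory GRing.Theory Num.Theory.
Local Open Scope ring_scope.

Lemma expand (A : comNzRingType) n (S : {set 'I_n}) (x y : 'I_n -> A) :
  \prod_(i in S) (x i + y i) = \sum_(T : {set 'I_n})
     (if T \subset S then \prod_(i in T) y i * \prod_(i in S :\: T) x i else 0).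
Proof.
rewrite big_mkcond /=.
transitivity (\prod_i ((if i \in S then y i else 0) + (if i \in S then x i else 1))).
  by apply: eq_bigr => i _; case: ifP => _; [exact: addrC | rewrite add0r].
rewrite bigA_distr; apply: eq_bigr => T _.
case: ifP => TS.
  rewrite (bigID (fun i => i \in T)) /=; congr (_ * _).
    by apply: eq_bigr => i iT; rewrite iT (subsetP TS i iT).
  rewrite [LHS]big_mkcond [RHS]big_mkcond; apply: eq_bigr => i _; rewrite in_setD.
  by case: (i \in T); case: (i \in S).
have [i iT iS] : exists2 i, i \in T & i \notin S.
  by apply/exists_inP; rewrite -(negbK [exists _ in _, _]) negb_exists_in; apply/negP => /forall_inP H; move/negP: TS; apply; apply/subsetP => j /H /negPn.
by rewrite (bigD1 i) //= iT (negbTE iS) mul0r.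
Qed.

Lemma pos_lb (R : realFieldType) n (s : seq 'I_n) (g : 'I_n -> R) :
  (forall i, i \in s -> 0 < g i) -> exists2 m, 0 < m & forall i, i \in s -> m <= g i.
Proof.
elim: s => [|j s IH] H; first by exists 1 => //.
have [m m0 hm] := IH (fun i ins => H i (mem_behead (s := j :: s) ins)).
have gj := H j (mem_head j s).
exists (Num.min m (g j)); first by rewrite lt_min m0 gj.
move=> i; rewrite inE => /orP[/eqP->|ins]; rewrite ge_min ?lexx ?orbT //.
by rewrite hm.
Qed.

Section Main.
Variables (R : realType) (n : nat) (c : {set 'I_n} -> R) (a : 'I_n -> R).

Definition PP : {mpoly R[n]} := \sum_(S : {set 'I_n}) c S *: \prod_(i in S) 'X_i.
Definition ee (T : {set 'I_n}) : R :=
  \sum_(S : {set 'I_n}) (if T \subset S then c S * \prod_(i in S :\: T) a i else 0).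

Lemma eval_shift (eps : 'I_n -> R) :
  PP.@[fun i => a i + eps i] = \sum_(T : {set 'I_n}) ee T * \prod_(i in T) eps i.
Proof.
rewrite /PP raddf_sum /=.
transitivity (\sum_(S : {set 'I_n}) \sum_(T : {set 'I_n})
   (if T \subset S then c S * \prod_(i in S :\: T) a i * \prod_(i in T) eps i else 0)).
  apply: eq_bigr => S _; rewrite mevalZ rmorph_prod /=.
  rewrite (eq_bigr (fun i => a i + eps i)); last by move=> i _; rewrite mevalXU.
  rewrite expand big_distrr; apply: eq_bigr => T _; case: ifP => _; last exact: mulr0.
  change (c S * (\prod_(i in T) eps i * \prod_(i in S :\: T) a i) = c S * \prod_(i in S :\: T) a i * \prod_(i in T) eps i); ring.
rewrite exchange_big; apply: eq_bigr => T _; rewrite /ee big_distrl; apply: eq_bigr => S _.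
by case: ifP => _; [done | exact: (esym (mul0r _))].
Qed.

Definition yq (I : {set 'I_n}) (i : 'I_n) : {mpoly R[n]} :=
  if i \in I then 0 else 'X_i - (a i)%:MP_[n].

Lemma restrict_shift (I : {set 'I_n}) :
  comp_mpoly [tuple (if i \in I then (a i)%:MP_[n] else 'X_i) | i < n] PP
  = \sum_(T : {set 'I_n}) ee T *: \prod_(i in T) yq I i.
Proof.
rewrite /PP raddf_sum /=.
transitivity (\sum_(S : {set 'I_n}) \sum_(T : {set 'I_n})
   (if T \subset S then (c S * \prod_(i in S :\: T) a i) *: \prod_(i in T) yq I i else 0)).
  apply: eq_bigr => S _; rewrite comp_mpolyZ rmorph_prod /=.
  rewrite (eq_bigr (fun i => (a i)%:MP_[n] + yq I i)); last first.
    move=> i _; rewrite comp_mpolyXU -(tnth_nth 0) tnth_mktuple /yq.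
    by case: ifP => _; rewrite ?addr0 // addrC subrK.
  rewrite expand scaler_sumr; apply: eq_bigr => T _; case: ifP => _; last by rewrite scaler0.
  rewrite -(rmorph_prod (@mpolyC n R)) mulrC mul_mpolyC scalerA //.
rewrite exchange_big; apply: eq_bigr => T _; rewrite /ee scaler_suml; apply: eq_bigr => S _.
by case: ifP => _; rewrite ?scale0r.
Qed.


Lemma key (I : {set 'I_n}) :
  (forall i, i \notin I -> -1 < a i < 1) -> cube a ->
  local_min_in PP (@cube R n) a ->
  forall T, T != set0 -> T \subset ~: I -> ee T = 0.
Proof.
move=> hI ca [d d0 hmin] T1 T10 T1J; apply/eqP; apply/negPn/negP => eT1.
pose Pr := fun T : {set 'I_n} => [&& T != set0, T \subset ~: I & ee T != 0].
have PT1 : Pr T1 by rewrite /Pr T10 T1J eT1.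
case: (@arg_minnP _ T1 Pr (fun T => #|T|) PT1) => T /and3P[T0 TJ eT] Tmin.
have eU : forall U : {set 'I_n}, U \proper T -> U != set0 -> ee U = 0.
  move=> U UT U0; apply/eqP; apply: contraTT (proper_card UT) => eU.
  rewrite -leqNgt; apply: Tmin; rewrite /Pr U0 eU andbT /=.
  exact: subset_trans (proper_sub UT) TJ.
case/set0Pn: (T0) => j0 j0T.
have [m m0 hm] : exists2 m : R, 0 < m & forall i, i \in enum T -> m <= 1 - `|a i|.
  apply: pos_lb => i; rewrite mem_enum => iT.
  have := hI i; rewrite -in_setC (subsetP TJ i iT) => /(_ isT) /andP[h1 h2].
  rewrite subr_gt0 ltr_norml h1 h2 //.
pose t := Num.min m (Num.min 1 (d / n.+1%:R)).
have hN : 0 < n.+1%:R :> R by rewrite ltr0n.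
have t0 : 0 < t by rewrite /t !lt_min m0 ltr01 divr_gt0.
have tm : t <= m by rewrite /t ge_min lexx.
have t1 : t <= 1 by rewrite /t !ge_min lexx orbT.
have td : t <= d / n.+1%:R by rewrite /t !ge_min lexx !orbT.
pose sg : R := if 0 < ee T then -1 else 1.
pose eps := fun i => if i \in T then (if i == j0 then sg * t else t) else 0.
have Hsum : forall v : 'I_n -> R, (forall i, i \notin T -> v i = 0) ->
    \sum_(U : {set 'I_n}) ee U * \prod_(i in U) v i = ee set0 + ee T * \prod_(i in T) v i.
  move=> v hv.
  rewrite (bigD1 set0) //= big_set0 mulr1; congr (_ + _).
  rewrite (bigD1 T) //= [X in _ + X = _]big1 ?addr0 // => U /andP[U0 UT].
  case: (boolP (U \subset T)) => sUT.
    by rewrite eU ?mul0r // properEneq UT sUT.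
  case/subsetPn: sUT => i iU iT.
  by rewrite (bigD1 i) //= hv // mul0r mulr0.
have H0 : PP.@[a] = ee set0.
  rewrite (@meval_eq _ _ a (fun i => a i + 0)); last by move=> i; rewrite addr0.
  rewrite eval_shift Hsum // (bigD1 j0) //= mul0r mulr0 addr0 //.
have H1 := hmin (fun i => a i + eps i).
rewrite H0 eval_shift Hsum in H1; last by move=> i /negbTE; rewrite /eps => ->.
have hp : 0 < \prod_(i in T | i != j0) eps i.
  apply: prodr_gt0 => i /andP[iT ij]; by rewrite /eps iT (negbTE ij).
have hneg : ee T * \prod_(i in T) eps i < 0.
  rewrite (bigD1 j0) //= {1}/eps j0T eqxx.
  move: hp; set q := \prod_(i in T | i != j0) eps i => hp.
  rewrite /sg; case: ifP => hT.
    have : 0 < t * q by rewrite mulr_gt0.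
    move: hT; set x := ee T; set y := t * q => hx hy.
    have -> : x * (-1 * t * q) = - (x * y) by rewrite /y; ring.
    by rewrite oppr_lt0 mulr_gt0.
  have hT' : ee T < 0 by rewrite lt_neqAle eT /= leNgt hT.
  rewrite mul1r; have := mulr_gt0 t0 hp; move: hT'; set x := ee T; set y := t * q; nra.
have : ee set0 <= ee set0 + ee T * \prod_(i in T) eps i.
  apply: H1.
    apply/forallP => i; rewrite /eps; case: ifP => iT; last first.
      by rewrite addr0; move/forallP: ca => /(_ i).
    have := hm i; rewrite mem_enum => /(_ iT) hmi.
    have /andP[h1 h2] : - `|a i| <= a i <= `|a i| by rewrite -ler_norml.
    have tt : t <= 1 - `|a i| by apply: le_trans hmi.
    case: ifP => _; last by apply/andP; split; lra.
    rewrite /sg; case: ifP => _; apply/andP; split; lra.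
  apply: (@le_trans _ _ (\sum_(i < n) t)).
    apply: ler_sum => i _; rewrite opprD addrA subrr add0r sqrrN /eps.
    have tt2 : t ^+ 2 <= t by rewrite expr2 ler_piMl // ltW.
    case: ifP => _; last by rewrite expr0n /= ltW.
    case: ifP => _ //; rewrite /sg; case: ifP => _ //.
    by rewrite exprMn sqrrN expr1n mul1r.
    by rewrite mul1r.
  rewrite sumr_const card_ord -mulr_natr.
  apply: (@le_trans _ _ (t * n.+1%:R)).
    by rewrite ler_wpM2l ?ltW // ltr_nat.
  by apply: (le_trans (ler_wpM2r (ltW hN) td)); rewrite divfK ?gt_eqF.
by rewrite -subr_ge0 addrC addKr leNgt hneg.
Qed.

End Main.

Unset Implicit Arguments.
Theorem lemma6 (R : realType) (n : nat) (f : seq (clause n)) (a : 'I_n -> R) :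
  cube a -> local_min_in (F_of R f) (@cube R n) a -> feasible (F_of R f) a.
Proof.
move=> ca lm.
pose c := fun S : {set 'I_n} => \sum_(cl <- f) fourier_coef R cl S.
have FP : F_of R f = PP c.
  rewrite /F_of /FE /PP exchange_big; apply: eq_bigr => S _.
  by rewrite scaler_suml.
rewrite FP in lm *.
have hI : forall i, i \notin fixed_set a -> -1 < a i < 1.
  move=> i; rewrite inE negb_or => /andP[h1 h2].
  move/forallP: ca => /(_ i) /andP[l1 l2].
  by rewrite !lt_neqAle l1 l2 h1 eq_sym h2.
have K := key hI ca lm.
exists (ee c a set0).
rewrite /restrict restrict_shift (bigD1 set0) //= big_set0.
rewrite [X in _ + X]big1 ?addr0; first by rewrite -mul_mpolyC mulr1.
move=> T T0; case: (boolP (T \subset ~: fixed_set a)) => TJ.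
  by rewrite K // scale0r.
case/subsetPn: TJ => i iT; rewrite inE negbK => iI.
by rewrite (bigD1 i) //= /yq iI mul0r scaler0.
Qed.
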